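(* The matrix $\mathbb G(1)$ is a unitary operator on $\ell^2$ of the set of oriented edges of $\mathcal B$, i.e. on the space of $X=\sum_{\vec A}x_{\vec A}\delta_{\vec A}$ with norm $\|X\|^2=\sum_{\vec A}|x_{\vec A}|^2$.
   Context: $\mathcal B$ is the $2$-regular Bethe lattice: the infinite tree in which every node has exactly $3$ neighbours; each edge has two orientations, $-\vec A$ being the opposite of $\vec A$; write $\vec A\to\vec B$ when the terminal node of $\vec A$ equals the initial node of $\vec B$. $\mathbb G(1)$ is the matrix indexed by oriented edges with entries $\mathbb G(1)_{\vec B,\vec A}=-1/3$ if $\vec B=-\vec A$, $2/3$ if $\vec A\to\vec B$ and $\vec B\ne-\vec A$, and $0$ otherwise (it is the time-one propagator of Dirac masses for the wave equation with Kirchhoff conditions on $\mathcal B$). *)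

(* Defs.v *)
From HB Require Import structures.
From mathcomp Require Import all_boot all_order all_algebra.
From mathcomp Require Import all_classical all_reals.
From mathcomp Require Import constructive_ereal ereal esum.
From mathcomp Require Import complex.
Set Implicit Arguments. Unset Strict Implicit. Unset Printing Implicit Defensive.
Import Order.TTheory GRing.Theory Num.Theory.
Local Open Scope ring_scope.
Local Open Scope classical_set_scope.
Local Open Scope complex_scope.
Import ComplexField.

(* The 2-regular Bethe lattice B (infinite tree, every node of degree 3),   *)
(* realised as the Cayley graph of Z/2 * Z/2 * Z/2: nodes are reduced words *)
(* over the alphabet 'I_3 (no two consecutive equal letters, most recent    *)
(* letter at the head), and node w is adjacent to step w a for a : 'I_3.    *)

Definition reduced (w : seq 'I_3) : bool := sorted (fun a b => a != b) w.

Definition node := {w : seq 'I_3 | reduced w}.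

Definition step_seq (w : seq 'I_3) (a : 'I_3) : seq 'I_3 :=
  if w is b :: w' then (if b == a then w' else a :: w) else [:: a].

Lemma step_seq_reduced (w : seq 'I_3) (a : 'I_3) :
  reduced w -> reduced (step_seq w a).
Proof.
case: w => [|b w'] //= Hw.
case: eqP => [_|/eqP Hba].
  by move: Hw; rewrite /reduced /=; apply: path_sorted.
by rewrite /reduced /= eq_sym Hba Hw.
Qed.

Definition step (v : node) (a : 'I_3) : node :=
  exist _ (step_seq (proj1_sig v) a) (step_seq_reduced a (proj2_sig v)).

(* Oriented edges: (v, a) is the edge from v to step v a.  Every edge        *)
(* {v, step v a} carries exactly the two orientations (v,a), (step v a, a).  *)
Definition oedge := (node * 'I_3)%type.

Definition init (e : oedge) : node := e.1.
Definition term (e : oedge) : node := step e.1 e.2.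
Definition opp (e : oedge) : oedge := (term e, e.2).

Definition arrow (A B : oedge) : bool := term A == init B.

Definition G1 (R : realType) (B A : oedge) : R[i] :=
  if B == opp A then (- (1 / 3%:R))%:C
  else if arrow A B then (2%:R / 3%:R)%:C
  else 0.

Definition sqmod (R : realType) (z : R[i]) : R := complex.Re z ^+ 2 + complex.Im z ^+ 2.

Definition l2sq (R : realType) (X : oedge -> R[i]) : \bar R :=
  \esum_(A in [set: oedge]) (sqmod (X A))%:E.

Definition in_l2 (R : realType) (X : oedge -> R[i]) : Prop :=
  (l2sq X < +oo)%E.

(* matrix-vector product (M X)_B = sum_A M_{B,A} x_A; meaningful when every *)
(* row of M has finite support (the sum is then a finite sum).              *)
Definition matapp (R : realType) (M : oedge -> oedge -> R[i])
  (X : oedge -> R[i]) : oedge -> R[i] :=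
  fun B => \sum_(A \in [set: oedge]) M B A * X A.

(* linear isometry of a Hilbert space is exactly a unitary operator.)       *)
Definition unitary_l2 (R : realType) (M : oedge -> oedge -> R[i]) : Prop :=
  [/\ (forall B, finite_set [set A | M B A != 0]),
      (forall X, in_l2 X -> in_l2 (matapp M X) /\ l2sq (matapp M X) = l2sq X)
    & (forall Y, in_l2 Y -> exists2 X, in_l2 X & matapp M X = Y)].

(* Main.v *)
Require Import Defs.
From HB Require Import structures.
From mathcomp Require Import all_boot all_order all_algebra.
From mathcomp Require Import all_classical all_reals.
From mathcomp Require Import constructive_ereal ereal esum.
From mathcomp Require Import complex.
Set Implicit Arguments. Unset Strict Implicit. Unset Printing Implicit Defensive.
Import Order.TTheory GRing.Theory Num.Theory.
Local Open Scope ring_scope.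
Local Open Scope classical_set_scope.
Local Open Scope complex_scope.
Import ComplexField.

Lemma step_seqK (w : seq 'I_3) (a : 'I_3) : reduced w -> step_seq (step_seq w a) a = w.
Proof.
case: w => [|b w'] /=; first by rewrite eqxx.
case: eqP => [->|/eqP Hba] Hw /=; last by rewrite eqxx.
case: w' Hw => [|c w''] //= /andP[Hac _].
by rewrite eq_sym (negPf Hac).
Qed.

Lemma stepK (v : node) (a : 'I_3) : step (step v a) a = v.
Proof. by apply: val_inj => /=; apply: step_seqK; case: v. Qed.

Lemma oppK : involutive Defs.opp.
Proof. by case=> v a; rewrite /Defs.opp /term /= stepK. Qed.

Definition cc (R : realType) (a b : 'I_3) : R :=
  if a == b then - (1 / 3%:R) else 2%:R / 3%:R.

Lemma G1E (R : realType) (v : node) (a b : 'I_3) :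
  G1 R (v, b) (Defs.opp (v, a)) = (cc R a b)%:C.
Proof.
rewrite /G1 oppK /cc /arrow /term /init /= stepK eqxx.
rewrite xpair_eqE eqxx /= eq_sym.
by case: eqP.
Qed.

Lemma G1_0 (R : realType) (B A : oedge) :
  A \notin [seq Defs.opp (B.1, a) | a <- enum 'I_3] -> G1 R B A = 0.
Proof.
move=> H; rewrite /G1; case: eqP => [E|_].
  have EA : A = Defs.opp B by rewrite E oppK.
  by move: H; rewrite EA; case: B {E EA} => v b; by rewrite (map_f (fun a => Defs.opp (v, a))) // mem_enum.
case: ifP => // /eqP E; move: H.
have -> : A = Defs.opp (B.1, A.2).
  case: A E => u a E /=; rewrite -[LHS]oppK; congr Defs.opp.
  by rewrite /Defs.opp E.
by rewrite (map_f (fun a => Defs.opp (B.1, a))) // mem_enum.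
Qed.

Lemma mapp_uniq (v : node) : uniq [seq Defs.opp (v, a) | a <- enum 'I_3].
Proof.
rewrite map_inj_uniq ?enum_uniq // => a b /(congr1 snd) //.
Qed.

Lemma matappE (R : realType) (X : oedge -> R[i]) (v : node) (b : 'I_3) :
  matapp (@G1 R) X (v, b) = \sum_(a < 3) (cc R a b)%:C * X (Defs.opp (v, a)).
Proof.
rewrite /matapp.
rewrite -(fsbig_widen (range (fun a => Defs.opp (v, a))) setT) //; last first.
  move=> x [_ Hx] /=; rewrite G1_0 ?mul0r //=.
  apply/negP => /mapP [a _ Ea]; apply: Hx; by exists a.
rewrite (fsbig_fwiden [seq Defs.opp (v, a) | a <- enum 'I_3]) //.
- by rewrite big_map big_enum /=; apply: eq_bigr => a _; rewrite G1E.
- by move=> x [a _ <-] /=; rewrite (map_f (fun a => Defs.opp (v, a))) // mem_enum.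
- exact: mapp_uniq.
- move=> x [/= /mapP [a _ ->] Hx]; exfalso; apply: Hx; by exists a.
Qed.

Lemma sqmod_ge0 (R : realType) (z : R[i]) : 0 <= sqmod z.
Proof. by rewrite /sqmod addr_ge0 // sqr_ge0. Qed.

Lemma l2sqE (R : realType) (X : oedge -> R[i]) :
  l2sq X = \esum_(v in [set: node]) (\sum_(a < 3) sqmod (X (v, a)))%:E.
Proof.
rewrite /l2sq.
have -> : [set: oedge] = [set: node] `*`` (fun _ => [set: 'I_3]).
  by apply/seteqP; split => // -[v a].
transitivity (\esum_(k in [set: node] `*`` (fun _ => [set: 'I_3]))
   (fun v a => (sqmod (X (v, a)))%:E) k.1 k.2); first by apply: eq_esum => -[].
transitivity (\esum_(v in [set: node]) \esum_(a in [set: 'I_3]) (sqmod (X (v,a)))%:E).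
  by apply/esym/esum_esum => *; rewrite lee_fin sqmod_ge0.
apply: eq_esum => v _.
rewrite esum_fset //; last by move=> *; rewrite lee_fin sqmod_ge0.
rewrite (fsbig_fwiden (enum 'I_3)) ?enum_uniq //.
- by rewrite big_enum /= sumEFin.
- by move=> a _ /=; rewrite mem_enum.
- by move=> a [_ []].
- exact: finite_finset.
Qed.

From mathcomp Require Import ring lra.

Lemma cc_iso (R : realType) (z : 'I_3 -> R[i]) :
  \sum_(b < 3) sqmod (\sum_(a < 3) (cc R a b)%:C * z a) = \sum_(a < 3) sqmod (z a).
Proof.
rewrite !big_ord_recr !big_ord0 /= !add0r /cc /=.
set a0 := z _; set a1 := z _; set a2 := z _.
clearbody a0 a1 a2; case: a0 => x0 y0; case: a1 => x1 y1; case: a2 => x2 y2.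
rewrite /sqmod /=.
by field.
Qed.

Lemma cc_inv (R : realType) (y : 'I_3 -> R[i]) (b : 'I_3) :
  \sum_(a < 3) (cc R a b)%:C * (\sum_(d < 3) (cc R a d)%:C * y d) = y b.
Proof.
rewrite !big_ord_recr !big_ord0 /= !add0r /cc /=.
set a0 := y _; set a1 := y _; set a2 := y _.
have Hb : y b = if b == ord0 then a0 else if b == lift ord0 ord0 then a1 else a2.
  by case: b => [[|[|[|]]] Hb] //; rewrite /a0 /a1 /a2; congr y; apply: val_inj.
rewrite Hb; clear Hb; clearbody a0 a1 a2; case: a0 => x0 y0; case: a1 => x1 y1; case: a2 => x2 y2.
case: b => [[|[|[|]]] Hb] //=; apply/eqP; rewrite eq_complex /=; apply/andP; split; apply/eqP; by field.
Qed.

Lemma l2sq_in (R : realType) (X : oedge -> R[i]) :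
  l2sq X = \esum_(v in [set: node]) (\sum_(a < 3) sqmod (X (Defs.opp (v, a))))%:E.
Proof.
rewrite -(l2sqE (fun A => X (Defs.opp A))) /l2sq.
apply: (@reindex_esum R _ _ setT setT Defs.opp (fun A => (sqmod (X A))%:E)).
by rewrite setTT_bijective; exists Defs.opp; apply: oppK.
Qed.

Lemma ccC (R : realType) (a b : 'I_3) : cc R a b = cc R b a.
Proof. by rewrite /cc eq_sym. Qed.

Theorem lemma1 (R : realType) : unitary_l2 (@G1 R).
Proof.
have iso X : l2sq (matapp (@G1 R) X) = l2sq X.
  rewrite l2sqE l2sq_in; apply: eq_esum => v _; congr EFin.
  under eq_bigr do rewrite matappE.
  exact: (cc_iso (fun a => X (Defs.opp (v, a)))).
split.
- move=> B; apply: (@sub_finite_set _ _ [set` [seq Defs.opp (B.1, a) | a <- enum (ordinal 3)]]); last exact: finite_seq.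
  move=> A /= HA; apply: contraNT HA => HA; rewrite G1_0 //.


- by move=> X HX; rewrite /in_l2 iso; split.
- move=> Y HY.
  pose X := fun A : oedge => \sum_(b < 3) (cc R A.2 b)%:C * Y (term A, b).
  have XE v a : X (Defs.opp (v, a)) = \sum_(b < 3) (cc R a b)%:C * Y (v, b).
    by rewrite /X /Defs.opp /term /= stepK.
  exists X.
    rewrite /in_l2 l2sq_in; move: HY; rewrite /in_l2 l2sqE.
    congr (_ < _)%E; apply: eq_esum => v _; congr EFin.
    symmetry; under eq_bigr do rewrite XE.
    under eq_bigr do under eq_bigr do rewrite ccC.
    exact: (cc_iso (fun b => Y (v, b))).
  apply: funext => -[v b]; rewrite matappE.
  under eq_bigr do rewrite XE.
  exact: (cc_inv (fun d => Y (v, d))).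
Qed.
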